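(* Let $k$ be an algebraically closed field of characteristic $p\ge0$, $n\ge1$, and let $\pi : \mathrm{GL}(n,k)\to\mathrm{PGL}(n,k)$ be the natural surjection. The map $\varpi : \mathrm{Hom}_{\mathrm{alg.gr}}(\mathbb{G}_a,\mathrm{GL}(n,k))\to\mathrm{Hom}_{\mathrm{alg.gr}}(\mathbb{G}_a,\mathrm{PGL}(n,k))$, $\varpi(\varphi) = \pi\circ\varphi$, is bijective.
   Context: $\mathbb{G}_a$ denotes the additive group of $k$; $\mathrm{Hom}_{\mathrm{alg.gr}}$ denotes the set of homomorphisms of algebraic groups. *)

(* Defs.v *)
From HB Require Import structures.
From mathcomp Require Import all_boot all_order all_algebra.
Set Implicit Arguments. Unset Strict Implicit. Unset Printing Implicit Defensive.
Import GRing.Theory.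
Local Open Scope ring_scope.

(* Over an algebraically closed (hence infinite) field k, algebraic varieties
   and morphisms are described classically by their k-points. *)

(* A regular function on the affine line A^1 = G_a : a polynomial function. *)
Definition polyfun (k : fieldType) (g : k -> k) : Prop :=
  exists p : {poly k}, forall s, g s = p.[s].

(* A morphism of varieties A^1 -> GL(n,k): the coordinate ring of GL_n is
   k[x_ij, 1/det]; the pullbacks of the x_ij and of 1/det must be regular. *)
Definition GL_morph (k : fieldType) (n : nat) (f : k -> 'M[k]_n) : Prop :=
  (forall s, \det (f s) != 0) /\
  (forall i j, polyfun (fun s => f s i j)) /\
  polyfun (fun s => (\det (f s))^-1).

Definition Hom_Ga_GL (k : fieldType) (n : nat) (f : k -> 'M[k]_n) : Prop :=
  GL_morph f /\ forall s t, f (s + t) = f s *m f t.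

(* PGL(n,k) = GL(n,k) / k^*: two invertible matrices give the same point of
   PGL(n,k) iff they are proportional. *)
Definition proj_eq (k : fieldType) (n : nat) (A B : 'M[k]_n) : Prop :=
  exists c : k, c != 0 /\ A = c *: B.

(* A map A^1 -> PGL(n,k), given by pointwise lifts f s in GL(n,k), is a
   morphism iff the pullbacks of the generators of the coordinate ring
   k[x_ij, 1/det]^{G_m} of PGL_n, namely (degree n monomial)/det, are regular.
   Every degree-n monomial in the x_ij is prod_(l<n) x_(a l)(b l). *)
Definition PGL_morph (k : fieldType) (n : nat) (f : k -> 'M[k]_n) : Prop :=
  (forall s, \det (f s) != 0) /\
  forall a b : 'I_n -> 'I_n,
    polyfun (fun s => (\prod_(l < n) f s (a l) (b l)) / \det (f s)).

(* Hom_{alg.gr}(G_a, PGL(n,k)), elements represented by lifts. *)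
Definition Hom_Ga_PGL (k : fieldType) (n : nat) (f : k -> 'M[k]_n) : Prop :=
  PGL_morph f /\ forall s t, proj_eq (f (s + t)) (f s *m f t).

(* Main.v *)
From HB Require Import structures.
Require Import Defs.
From mathcomp Require Import all_boot all_order all_algebra.
From mathcomp Require Import ring zify.
From Stdlib Require Import FunctionalExtensionality.
Set Implicit Arguments. Unset Strict Implicit. Unset Printing Implicit Defensive.
Import GRing.Theory.
Local Open Scope ring_scope.

Section S.
Variable k : closedFieldType.

Lemma nonroot (d : {poly k}) : d != 0 -> exists t, d.[t] != 0.
Proof.
move=> d0.
have : size (d * 'X + 1) != 1%N.
  rewrite size_addl ?size_mulX // ?size_poly1 ?size_mulX //.
  by rewrite eqSS size_poly_eq0.
  by rewrite ltnS size_poly_gt0.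
case/closed_rootP => t; rewrite /root !hornerE => /eqP ht.
exists t; apply/negP => /eqP h; move: ht; rewrite h mul0r add0r.
by move/eqP; rewrite oner_eq0.
Qed.

Lemma poly_eq_fun (p q : {poly k}) : (forall s, p.[s] = q.[s]) -> p = q.
Proof.
move=> h; apply/eqP; rewrite -subr_eq0; apply: contraT => /nonroot [t].
by rewrite !hornerE h subrr eqxx.
Qed.

Lemma poly_const (p : {poly k}) : (forall s, p.[s] != 0) -> forall s, p.[s] = p.[0].
Proof.
move=> h s; case: (boolP (size p == 1%N)) => [/size_poly1P [c _ ->]|].
  by rewrite !hornerC.
by case/closed_rootP => t /eqP rt; have := h t; rewrite rt eqxx.
Qed.

Variable n' : nat.
Local Notation N := n'.+1.

Definition ev (P : 'I_N -> 'I_N -> {poly k}) (s : k) : 'M[k]_N :=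
  \matrix_(i, j) (P i j).[s].

Lemma det_ev P : exists q : {poly k}, forall s, \det (ev P s) = q.[s].
Proof.
exists (\det (\matrix_(i, j) P i j)) => s.
have -> : ev P s = map_mx (horner_eval s) (\matrix_(i, j) P i j).
  by apply/matrixP => i j; rewrite !mxE.
by rewrite det_map_mx.
Qed.


Lemma ZM (A B : 'I_N -> 'I_N -> {poly k}) :
  (forall t, exists z : k, z ^+ N = 1 /\ ev A t = z *: ev B t) ->
  ev A 0 = ev B 0 -> ev A 0 != 0 -> forall t, ev A t = ev B t.
Proof.
move=> h h0 nz.
have [rs hrs] := closed_field_poly_normal ('X^N - 1 : {poly k}).
have inrs z : z ^+ N = 1 -> z \in rs.
  move=> hz; rewrite -root_prod_XsubC.
  have : root ('X^N - 1) z by rewrite /root !hornerE hz subrr.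
  by rewrite {1}hrs /root hornerZ lead_coefXnsubC // mul1r.
have [z [zrs hz]] : exists z, z \in rs /\ forall i j, A i j = z *: B i j.
  case: (boolP (has (fun z => [forall i, forall j, A i j == z *: B i j]) rs)).
    case/hasP => z zrs /forallP hz; exists z; split=> // i j.
    by apply/eqP; exact: (forallP (hz i) j).
  move=> hn; exfalso.
  set Q := \prod_(z <- rs) \prod_i \prod_(j | A i j != z *: B i j) (A i j - z *: B i j).
  have : Q != 0.
    rewrite prodf_seq_neq0; apply/allP => z _ /=; apply/prodf_neq0 => i _.
    by apply/prodf_neq0 => j; rewrite subr_eq0.
  case/nonroot => t; rewrite /Q horner_prod.
  have [z [hz ht]] := h t.
  apply/negP; rewrite negbK prodf_seq_eq0; apply/hasP; exists z; first exact: inrs.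
  rewrite /= horner_prod; apply/prodf_eq0.
  move/hasPn: hn => /(_ z (inrs z hz)); rewrite negb_forall => /existsP [i].
  rewrite negb_forall => /existsP [j hij].
  exists i => //; rewrite horner_prod; apply/prodf_eq0; exists j => //.
  move/matrixP: ht => /(_ i j); rewrite !mxE => ht.
  by rewrite !hornerE ht subrr.
have evAB t : ev A t = z *: ev B t.
  by apply/matrixP => i j; rewrite !mxE hz hornerZ.
have z1 : z = 1.
  have : (1 - z) *: ev A 0 == 0.
    by rewrite scalerBl scale1r {2}h0 -evAB subrr.
  rewrite scaler_eq0 (negbTE nz) orbF subr_eq0 => /eqP <-; done.
by move=> t; rewrite evAB z1 scale1r.
Qed.


Lemma reduce (m : 'I_N -> 'I_N -> 'I_N -> 'I_N -> {poly k})
  (hm : forall s, exists i j, (m i j i j).[s] != 0) :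
  forall (H : {poly k}) (F : 'I_N -> 'I_N -> {poly k}), H != 0 ->
  (forall a b i j, F a b * F i j ^+ n' = H * m a b i j) ->
  exists (F' : 'I_N -> 'I_N -> {poly k}) (c : k), c != 0 /\
    forall a b i j, F' a b * F' i j ^+ n' = c%:P * m a b i j.
Proof.
move=> H; elim: {H}(size H) {-2}H (leqnn (size H)) => [|sz IH] H hs F Hn0 hF.
  by move: Hn0; rewrite -size_poly_eq0; move: hs; rewrite leqn0 => ->.
case: (boolP (size H == 1%N)) => [/size_poly1P [c c0 hc]|].
  by exists F, c; split=> //; rewrite -hc.
case/closed_rootP => s0 rs0.
set X0 := 'X - s0%:P.
have Fz i j : root (F i j) s0.
  have := hF i j i j; rewrite -exprS => /(congr1 (horner^~ s0)).
  rewrite hornerM (rootP rs0) mul0r horner_exp => /eqP.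
  by rewrite expf_eq0 /=.
pose F' i j := F i j %/ X0.
have FF i j : F i j = F' i j * X0 by rewrite divpK // dvdp_XsubCl.
have X0n : X0 ^+ N != 0 by rewrite expf_neq0 // polyXsubC_eq0.
have hF2 a b i j : H * m a b i j = F' a b * F' i j ^+ n' * X0 ^+ N.
  rewrite -hF !FF exprMn exprS; ring.
have [i0 [j0 hm0]] := hm s0.
have dH : X0 ^+ N %| H.
  rewrite -(@Gauss_dvdpl _ _ (m i0 j0 i0 j0)); last first.
    by apply: coprimep_expl; rewrite coprimep_sym coprimep_XsubC.
  by rewrite hF2 dvdp_mulIr.
pose H' := H %/ X0 ^+ N.
have HH : H = H' * X0 ^+ N by rewrite divpK.
have H'0 : H' != 0 by apply: contraNneq Hn0 => h; rewrite HH h mul0r.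
apply: (IH H' _ F') => //.
  have : size H = (size H' + N.+1).-1.
    by rewrite {1}HH size_mul // size_exp_XsubC.
  move=> e; move: hs; rewrite e addnS /= addnS ltnS => h; exact: leq_trans (leq_addr _ _) h.
move=> a b i j; apply: (mulIf X0n).
by rewrite -hF2 HH; ring.
Qed.


Lemma nz_entry (A : 'M[k]_N) : \det A != 0 -> exists i j, A i j != 0.
Proof.
move=> hA; case: (boolP [exists i, exists j, A i j != 0]).
  by case/existsP => i /existsP [j h]; exists i, j.
rewrite negb_exists => /forallP h; exfalso; move: hA.
have -> : A = 0.
  apply/matrixP => i j; rewrite mxE; move: (h i); rewrite negb_exists.
  by move/forallP => /(_ j); rewrite negbK => /eqP.
by rewrite det0 eqxx.
Qed.

Lemma hom_props (f : k -> 'M[k]_N) : Hom_Ga_GL f ->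
  exists P, (forall s, f s = ev P s) /\ f 0 = 1 /\ forall s, \det (f s) = 1.
Proof.
case=> [[hd [he _]] hh].
have [P hP] : exists P : 'I_N -> 'I_N -> {poly k}, forall i j s, f s i j = (P i j).[s].
  apply: (@fin_all_exists _ _ (fun i q => forall j s, f s i j = (q j).[s])) => i.
  apply: (@fin_all_exists _ _ (fun j q => forall s, f s i j = q.[s])) => j.
  exact: he.
have fE s : f s = ev P s by apply/matrixP => i j; rewrite mxE hP.
have f0 : f 0 = 1.
  have e := hh 0 0; rewrite addr0 in e.
  have u : f 0 \in unitmx by rewrite unitmxE unitfE hd.
  by rewrite -(mulKmx u (f 0)) -e mulVmx.
exists P; split=> //; split=> // s.
have [q hq] := det_ev P.
have hq' s' : q.[s'] != 0 by rewrite -hq -fE.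
by rewrite fE hq (poly_const hq') -hq -fE f0 det1.
Qed.

Lemma prop_lemma (A B : 'M[k]_N) (c D : k) : c != 0 -> D != 0 -> \det B != 0 ->
  (forall a b i j, A a b * A i j ^+ n' = c * (B a b * B i j ^+ n' / D)) ->
  exists l, l != 0 /\ A = l *: B.
Proof.
move=> c0 D0 dB h.
have [i [j hij]] := nz_entry dB.
have Aij : A i j != 0.
  have := h i j i j; rewrite -!exprS => e.
  have : A i j ^+ N != 0 by rewrite e mulf_neq0 // mulf_neq0 ?invr_neq0 // expf_neq0.
  by rewrite expf_eq0 /=.
have An : A i j ^+ n' != 0 by rewrite expf_neq0.
exists (c * B i j ^+ n' / D / A i j ^+ n'); split.
  by rewrite !mulf_neq0 ?invr_neq0 ?expf_neq0.
apply/matrixP => a b; rewrite mxE.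
apply: (mulIf An); rewrite h; field.
by rewrite D0 An.
Qed.

End S.

Theorem lemma1p6 (k : closedFieldType) (n : nat) (hn : (1 <= n)%N) :
  (forall f : k -> 'M[k]_n, Hom_Ga_GL f -> Hom_Ga_PGL f) /\
  (forall f1 f2 : k -> 'M[k]_n, Hom_Ga_GL f1 -> Hom_Ga_GL f2 ->
     (forall s, proj_eq (f1 s) (f2 s)) -> f1 = f2) /\
  (forall g : k -> 'M[k]_n, Hom_Ga_PGL g ->
     exists f : k -> 'M[k]_n, Hom_Ga_GL f /\ forall s, proj_eq (f s) (g s)).
Proof.
case: n hn => [//|n'] _.
split; [|split].
- move=> f hf; have [P [hP [f0 d1]]] := hom_props hf.
  split; [split|].
  + by move=> s; rewrite d1 oner_neq0.
  + move=> a b; exists (\prod_(l < n'.+1) P (a l) (b l)) => s.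
    by rewrite d1 divr1 horner_prod; apply: eq_bigr => l _; rewrite hP mxE.
  + move=> s t; exists 1; split; first exact: oner_neq0.
    by rewrite scale1r; exact: hf.2.
- move=> f1 f2 h1 h2 h.
  have [P1 [hP1 [f10 d1]]] := hom_props h1.
  have [P2 [hP2 [f20 d2]]] := hom_props h2.
  apply: functional_extensionality => t; rewrite hP1 hP2; apply: ZM.
  + move=> s; have [c [c0 hc]] := h s; exists c; split; last by rewrite -hP1 -hP2.
    by have := congr1 determinant hc; rewrite detZ d1 d2 mulr1 => ->.
  + by rewrite -hP1 -hP2 f10 f20.
  + by rewrite -hP1 f10 oner_neq0.
- move=> g [[hd hmon] hhom].
  pose A (a i : 'I_n'.+1) := fun l : 'I_n'.+1 => if l == ord0 then a else i.
  have prodA s a b i j :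
      \prod_(l < n'.+1) g s (A a i l) (A b j l) = g s a b * g s i j ^+ n'.
    rewrite big_ord_recl /A eqxx; congr (_ * _).
    rewrite (eq_bigr (fun _ => g s i j)) ?prodr_const ?card_ord // => l _.
  have hm0 a b i j : exists p : {poly k},
      forall s, g s a b * g s i j ^+ n' / \det (g s) = p.[s].
    by have [p hp] := hmon (A a i) (A b j); exists p => s; rewrite -hp prodA.
  have [mP hmP] : exists mP : 'I_n'.+1 -> 'I_n'.+1 -> 'I_n'.+1 -> 'I_n'.+1 -> {poly k},
      forall a b i j s, g s a b * g s i j ^+ n' / \det (g s) = (mP a b i j).[s].
    apply: (@fin_all_exists _ _ (fun a q => forall b i j s,
       g s a b * g s i j ^+ n' / \det (g s) = (q b i j).[s])) => a.
    apply: (@fin_all_exists _ _ (fun b q => forall i j s,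
       g s a b * g s i j ^+ n' / \det (g s) = (q i j).[s])) => b.
    apply: (@fin_all_exists _ _ (fun i q => forall j s,
       g s a b * g s i j ^+ n' / \det (g s) = (q j).[s])) => i.
    apply: (@fin_all_exists _ _ (fun j q => forall s,
       g s a b * g s i j ^+ n' / \det (g s) = q.[s])) => j.
    exact: hm0.
  have hm s : exists i j, (mP i j i j).[s] != 0.
    have [i [j hij]] := nz_entry (hd s); exists i, j.
    by rewrite -hmP -exprS mulf_neq0 ?expf_neq0 ?invr_neq0.
  have [i0 [j0 h00]] := hm 0.
  have P0 : mP i0 j0 i0 j0 != 0 by apply: contraNneq h00 => ->; rewrite horner0.
  have hF0 a b i j : mP a b i0 j0 * mP i j i0 j0 ^+ n' =
      mP i0 j0 i0 j0 ^+ n' * mP a b i j.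
    apply: poly_eq_fun => s.
    rewrite !hornerM !horner_exp -!hmP !expr_div_n !exprMn; ring.
  have [F [c [c0 hF]]] := @reduce k n' mP hm (mP i0 j0 i0 j0 ^+ n')
      (fun i j => mP i j i0 j0) (expf_neq0 _ P0) hF0.
  have hl s : exists l, l != 0 /\ ev F s = l *: g s.
    apply: (prop_lemma c0 (hd s) (hd s)) => a b i j.
    have := congr1 (horner^~ s) (hF a b i j).
    by rewrite !mxE !hornerM horner_exp hornerC -hmP.
  have [c1 [c10 e1]] := hhom 0 0; rewrite addr0 in e1.
  have u0 : g 0 \in unitmx by rewrite unitmxE unitfE hd.
  have g0 : g 0 = c1^-1 *: 1.
    have := congr1 (mulmx (invmx (g 0))) e1.
    rewrite mulVmx // -scalemxAr mulKmx // => e.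
    have -> : (1 : 'M[k]_n'.+1) = c1 *: g 0 by rewrite -e.
    by rewrite scalerA mulVf // scale1r.
  have [l0 [l00 hl0]] := hl 0.
  pose mu := l0 / c1.
  have mu0 : mu != 0 by rewrite mulf_neq0 ?invr_neq0.
  have F0 : ev F 0 = mu *: 1 by rewrite hl0 g0 scalerA.
  pose G i j := mu^-1 *: F i j.
  have fE s : ev G s = mu^-1 *: ev F s.
    by apply/matrixP => i j; rewrite !mxE hornerZ.
  have f0 : ev G 0 = 1 by rewrite fE F0 scalerA mulVf // scale1r.
  have fg s : exists a, a != 0 /\ ev G s = a *: g s.
    have [l [l0' hl']] := hl s; exists (mu^-1 * l); split.
      by rewrite mulf_neq0 ?invr_neq0.
    by rewrite fE hl' scalerA.
  have detne s : \det (ev G s) != 0.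
    have [a [a0 ->]] := fg s.
    by rewrite detZ mulf_neq0 ?expf_neq0.
  have det1s s : \det (ev G s) = 1.
    have [q hq] := det_ev G.
    have hq' s' : q.[s'] != 0 by rewrite -hq.
    by rewrite hq (poly_const hq') -hq f0 det1.
  have hom s t : exists z, z ^+ n'.+1 = 1 /\ ev G (s + t) = z *: (ev G s *m ev G t).
    have [a [a0 ha]] := fg (s + t).
    have [b [b0 hb]] := fg s.
    have [d [d0 hd']] := fg t.
    have [z [z0 hz]] := hhom s t.
    have gs : g s = b^-1 *: ev G s by rewrite hb scalerA mulVf // scale1r.
    have gt : g t = d^-1 *: ev G t by rewrite hd' scalerA mulVf // scale1r.
    have E : ev G (s + t) = (a * z * b^-1 * d^-1) *: (ev G s *m ev G t).
      rewrite ha hz gs gt -scalemxAl -scalemxAr !scalerA. by rewrite !mulrA.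
    exists (a * z * b^-1 * d^-1); split=> //.
    have := congr1 determinant E.
    by rewrite detZ det_mulmx !det1s !mulr1 => <-.
  have fhom s t : ev G (s + t) = ev G s *m ev G t.
    pose A1 i j := G i j \Po ('X + s%:P).
    pose B1 i j := \sum_l (ev G s i l) *: G l j.
    have evA t' : ev A1 t' = ev G (s + t').
      by apply/matrixP => i j; rewrite !mxE horner_comp !hornerE addrC.
    have evB t' : ev B1 t' = ev G s *m ev G t'.
      apply/matrixP => i j; rewrite !mxE horner_sum; apply: eq_bigr => l _.
      by rewrite hornerZ !mxE.
    rewrite -evA -evB; apply: ZM.
    + by move=> t'; rewrite evA evB; exact: hom.
    + by rewrite evA evB addr0 f0 mulmx1.
    + by rewrite evA addr0; apply: contraNneq (detne s) => ->; rewrite det0.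
  exists (ev G); split; last by move=> s; have [a [a0 ->]] := fg s; exists a.
  split=> //; split; first exact: detne.
  split.
    by move=> i j; exists (G i j) => s; rewrite mxE.
  by exists 1 => s; rewrite det1s invr1 hornerC.
Qed.
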